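(* Let $\mathbb{H}\in\{\mathbb{R},\mathbb{C}\}$, let $A\in\mathbb{H}^{m\times d}$ be any matrix, and let $\Omega\subset U_A$ be a convex domain. Then the map $b\mapsto P_{\mathcal{K}_A}(b)$ is continuous on $\Omega$.
   Context: $\mathcal{K}_A:=\{|Ax|:x\in\mathbb{H}^d\}\subset\mathbb{R}^m$ with $|Ax|$ the entrywise modulus; $P_{\mathcal{K}_A}(b)$ is the set of points of $\mathcal{K}_A$ at minimal Euclidean distance from $b$; $U_A:=\{b\in\mathbb{R}^m: P_{\mathcal{K}_A}(b)\text{ has exactly one element}\}$, and on $U_A$ the map $P_{\mathcal{K}_A}$ is regarded as single-valued. *)

(* Defs.v *)
From HB Require Import structures.
From mathcomp Require Import all_boot all_order all_algebra.
From mathcomp Require Import complex.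
From mathcomp Require Import all_classical all_reals all_analysis.
Set Implicit Arguments. Unset Strict Implicit. Unset Printing Implicit Defensive.
Import Order.TTheory GRing.Theory Num.Theory numFieldNormedType.Exports.
Local Open Scope ring_scope.
Local Open Scope classical_set_scope.

(* H is R (real case) or
   R[i] = complex R (complex case); [modH] is the modulus H -> R
   (absolute value in the real case, complex modulus normc in the complex case). *)

Definition KA (R : realType) (H : pzRingType) (modH : H -> R) (m d : nat)
  (A : 'M[H]_(m, d)) : set 'cV[R]_m :=
  [set map_mx modH (A *m x) | x in [set: 'cV[H]_d]].

Definition sqdist (R : realType) (m : nat) (b c : 'cV[R]_m) : R :=
  \sum_(i < m) (b i 0 - c i 0) ^+ 2.

Definition proj_set (R : realType) (m : nat) (K : set 'cV[R]_m) (b : 'cV[R]_m)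
  : set 'cV[R]_m :=
  [set y | K y /\ forall z, K z -> sqdist b y <= sqdist b z].

Definition U_set (R : realType) (m : nat) (K : set 'cV[R]_m) : set 'cV[R]_m :=
  [set b | exists y, proj_set K b = [set y]].

Definition convex_set_cV (R : realType) (m : nat) (S : set 'cV[R]_m) : Prop :=
  forall b c t, S b -> S c -> 0 <= t <= 1 -> S ((1 - t) *: b + t *: c).

Definition domain_cV (R : realType) (m : nat) (S : set 'cV[R]_m) : Prop :=
  S !=set0 /\ open S /\ connected S.

(* Main.v *)
Require Import Defs.
From HB Require Import structures.
From mathcomp Require Import all_boot all_order all_algebra.
From mathcomp Require Import complex.
From mathcomp Require Import all_classical all_reals all_analysis.
Import Order.TTheory GRing.Theory Num.Theory numFieldNormedType.Exports.
Local Open Scope ring_scope.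
Local Open Scope classical_set_scope.
From mathcomp Require Import ring lra.
Set Implicit Arguments. Unset Strict Implicit. Unset Printing Implicit Defensive.


Section Gen.
Variable R : realType.

Lemma nbhs_coord (m n : nat) (z : 'M[R]_(m, n)) (e : R) : 0 < e ->
  nbhs z [set c | forall i j, `|z i j - c i j| < e].
Proof.
move=> e0; apply/nbhs_ballP; exists e => //= c.
rewrite /ball /= /mx_ball => -[_ hc] i j.
by have := hc i j; rewrite /ball /=.
Qed.

Lemma nbhs_coordP (m n : nat) (z : 'M[R]_(m, n)) V : nbhs z V ->
  exists2 e : R, 0 < e & forall c : 'M[R]_(m, n), (forall i j, `|z i j - c i j| < e) -> V c.
Proof.
move=> /nbhs_ballP [e e0 hV]; exists e => // c hc; apply: hV.
rewrite /ball /= /mx_ball; split => // i j; rewrite /ball /=; apply: hc.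
Qed.

Lemma cvg_compact_cluster (T : topologicalType) (F : set_system T)
  {PF : ProperFilter F} (C : set T) x :
  compact C -> F C -> (forall z, C z -> cluster F z -> z = x) -> F --> x.
Proof.
move=> cC FC hcl U /=; rewrite nbhs_simpl => nU.
case: (pselect (F U)) => // nFU; exfalso.
move: nU; rewrite nbhsE.
move=> [W [oO Ox] OU].
have nFO : ~ F W by move=> FO; apply: nFU; apply: filterS FO.
pose G := filter_from F (fun A => A `&` ~` W).
have GF : ProperFilter G.
  apply: filter_from_proper.
    apply: filter_from_filter; first by exists setT; apply: filterT.
    move=> A B FA FB; exists (A `&` B); first exact: filterI.
    by move=> t [[At Bt] nOt]; split; split.
  move=> A FA; apply/set0P/negP => /eqP A0; apply: nFO.
  apply: filterS FA => t At; apply: contrapT => nOt.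
  have : (A `&` ~` W) t by [].
  by rewrite A0.
have GC : G C by exists C => // t [].
have [z [Cz clz]] := cC G GF GC.
have clFz : cluster F z.
  move=> A B FA nB; apply: clz nB; by exists A.
have zx := hcl z Cz clFz; subst z.
have GnO : G (~` W) by exists setT; [exact: filterT | by move=> t []].
have [t [nOt Ot]] := clz _ _ GnO (open_nbhs_nbhs (conj oO Ox)).
by apply: nOt.
Qed.


Lemma ler_term_sum (m : nat) (F : 'I_m -> R) i :
  (forall j, 0 <= F j) -> F i <= \sum_j F j.
Proof.
by move=> h; rewrite (bigD1 i) //= lerDl sumr_ge0.
Qed.

Lemma sqdist_est (m : nat) (x : 'cV[R]_m) (r e : R) : 0 < e ->
  exists2 eta : R, 0 < eta & forall x' y : 'cV[R]_m,
    (forall i, `|x i 0 - x' i 0| < eta) -> (forall i, `|y i 0| <= r) ->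
    `|sqdist x y - sqdist x' y| <= e.
Proof.
move=> e0.
set b := \sum_i `|x i 0|.
have b0 : 0 <= b by apply: sumr_ge0.
set K := 2 * b + 1 + 2 * `|r|.
have K1 : 1 <= K by rewrite /K; have := normr_ge0 r; lra.
have mK0 : 0 < m%:R * K + 1 by have : 0 <= m%:R :> R by []; nra.
set eta := Num.min 1 (e / (m%:R * K + 1)).
have eta0 : 0 < eta by rewrite lt_min ltr01 divr_gt0.
have eta1 : eta <= 1 by rewrite ge_min lexx.
have etae : eta <= e / (m%:R * K + 1) by rewrite ge_min lexx orbT.
exists eta => // x' y hx hy.
rewrite /sqdist -sumrB.
apply: le_trans (ler_norm_sum _ _ _) _.
apply: (@le_trans _ _ (\sum_(i < m) eta * K)).
  apply: ler_sum => i _.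
  have -> : (x i 0 - y i 0) ^+ 2 - (x' i 0 - y i 0) ^+ 2 =
     (x i 0 - x' i 0) * (x i 0 + x' i 0 - 2 * y i 0) by ring.
  rewrite normrM; apply: ler_pM => //; first exact: ltW.
  have xb : `|x i 0| <= b by exact: (@ler_term_sum m (fun j => `|x j 0|) i (fun j => normr_ge0 _)).
  have hxi := hx i.
  have x'b : `|x' i 0| <= b + 1.
    have := ler_normB (x i 0) (x i 0 - x' i 0).
    rewrite opprB addrC subrK => h.
    have := normr_ge0 (x i 0 - x' i 0); lra.
  have yr : `|y i 0| <= `|r| by apply: le_trans (hy i) (ler_norm r).
  have := ler_normD (x i 0 + x' i 0) (- (2 * y i 0)).
  have := ler_normD (x i 0) (x' i 0).
  rewrite normrN normrM ger0_norm //.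
  rewrite /K; lra.
rewrite sumr_const card_ord -mulr_natl.
have : eta * (m%:R * K + 1) <= e by rewrite -ler_pdivlMr.
have : 0 <= m%:R :> R by [].
nra.
Qed.


Lemma abs_le_sq (t : R) : `|t| <= t ^+ 2 + 1.
Proof.
have := sqr_ge0 (`|t| - 1); rewrite -(real_normK (num_real t)).
have := normr_ge0 t; nra.
Qed.

Lemma sqdist_sym (m : nat) (x y : 'cV[R]_m) : sqdist x y = sqdist y x.
Proof. by apply: eq_bigr => i _; rewrite -sqrrN opprB. Qed.

Lemma sqdist_term (m : nat) (x y : 'cV[R]_m) i :
  (x i 0 - y i 0) ^+ 2 <= sqdist x y.
Proof.
exact: (@ler_term_sum m (fun j => (x j 0 - y j 0) ^+ 2) i (fun j => sqr_ge0 _)).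
Qed.

Lemma sum_abs_bound (m : nat) (x : 'cV[R]_m) i : `|x i 0| <= \sum_j `|x j 0|.
Proof. exact: (@ler_term_sum m (fun j => `|x j 0|) i (fun j => normr_ge0 _)). Qed.

Lemma sum_abs_ge0 (m : nat) (x : 'cV[R]_m) : 0 <= \sum_j `|x j 0|.
Proof. by apply: sumr_ge0 => j _; apply: normr_ge0. Qed.

Lemma proj_cont_abstract (m n : nat) (f : 'rV[R]_n -> 'cV[R]_m)
  (K : set 'cV[R]_m) (Omega : set 'cV[R]_m) (p : 'cV[R]_m -> 'cV[R]_m) :
  K = range f -> continuous f ->
  (forall r, exists M : R, forall x, (forall i, `|f x i 0| <= r) ->
     exists x' : 'rV[R]_n, (forall k, `|x' ord0 k| <= M) /\ f x' = f x) ->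
  (forall b, Omega b -> proj_set K b = [set p b]) ->
  {within Omega, continuous p}.
Proof.
move=> KE fc hbd hp.
apply/subspace_continuousP => b Ob.
have clO : closure Omega b by apply: subset_closure.
have PF : ProperFilter (within Omega (nbhs b)) := within_nbhs_proper clO.
have hpK : forall b', Omega b' -> K (p b') /\
    (forall z, K z -> sqdist b' (p b') <= sqdist b' z).
  by move=> b' Ob'; have : proj_set K b' (p b') by rewrite hp.
have Kpb := (hpK b Ob).1.
set rho := \sum_i `|p b i 0|.
have [eta1 eta10 h1] := sqdist_est b rho ltr01.
set N := sqdist b (p b) + 1.
set beta := \sum_i `|b i 0|.
have beta0 : 0 <= beta := sum_abs_ge0 b.
set r0 := beta + eta1 + N + 1.
have FO : within Omega (nbhs b) Omega by apply: withinT.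
have Fnb : forall e, 0 < e ->
    within Omega (nbhs b) [set b' | forall i, `|b i 0 - b' i 0| < e].
  move=> e e0; rewrite /within; apply: filterS (nbhs_coord b e0).
  by move=> b' hb' _ i; apply: hb'.
have Fbnd : within Omega (nbhs b) [set b' | forall i, `|p b' i 0| <= r0].
  apply: filterS (filterI FO (Fnb _ eta10)) => b' [Ob' hb'] i.
  have [_ hmin] := hpK b' Ob'.
  have m1 := hmin _ Kpb.
  have m2 := h1 b' (p b) hb' (sum_abs_bound (p b)).
  have m3 := sqdist_term b' (p b') i.
  have m4 := abs_le_sq (b' i 0 - p b' i 0).
  have m5 : `|b i 0| <= beta := sum_abs_bound b i.
  have m6 := hb' i.
  have m7 := ler_normB (b' i 0) (b' i 0 - p b' i 0).
  rewrite opprB addrC subrK in m7.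
  have m8 := ler_normB (b i 0) (b i 0 - b' i 0).
  rewrite opprB addrC subrK in m8.
  move: m2; rewrite ler_norml => /andP[m2 m2'].
  rewrite /r0 /N.
  lra.
have [M hM] := hbd r0.
set S := [set v : 'rV[R]_n | forall k, `[- M, M]%classic (v ord0 k)].
have cS : compact S.
  have h := (@rV_compact R n (fun=> `[- M, M]%classic) (fun=> @segment_compact R _ _)).
  exact: h.
set C := f @` S.
have cC : compact C.
  by apply: continuous_compact => //; apply: continuous_subspaceT.
have CK : C `<=` K by rewrite KE => _ [x _ <-]; exists x.
apply: (cvg_compact_cluster (C:=C)).
- exact: cC.
- apply: filterS (filterI FO Fbnd) => b' [Ob' hb'].
  have := (hpK b' Ob').1; rewrite KE => -[x _ fx].
  have hx : forall i, `|f x i 0| <= r0 by rewrite fx.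
  have [x' [hx' fx']] := hM x hx.
  exists x'; last by rewrite fx'.
  move=> k /=; rewrite in_itv /= -ler_norml; exact: hx'.
move=> z Cz clz.
suff : proj_set K b z by rewrite hp.
split; first exact: CK.
move=> w Kw.
apply/ler_addgt0Pr => eps eps0.
set e := eps / 3.
have e0 : 0 < e by rewrite divr_gt0.
set r := r0 + \sum_i `|w i 0| + beta.
have r00 : 0 <= r0.
  rewrite /r0 /N.
  have : 0 <= sqdist b (p b) by apply: sumr_ge0 => j _; apply: sqr_ge0.
  lra.
have r0r : r0 <= r.
  have := sum_abs_ge0 w.
  rewrite /r; lra.
have [eta2 eta20 h2] := sqdist_est b r e0.
have [eta3 eta30 h3] := sqdist_est z r e0.
have FD : (p @ within Omega (nbhs b))
    [set c | sqdist b c <= sqdist b w + 2 * e].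
  apply: filterS (filterI (filterI FO Fbnd) (Fnb _ eta20)) => b' [[Ob' hb'] hb2].
  have [_ hmin] := hpK b' Ob'.
  have m1 := hmin _ Kw.
  have m2 := h2 b' (p b') hb2 (fun i => le_trans (hb' i) r0r).
  have m3' : `|sqdist b w - sqdist b' w| <= e.
    apply: (h2 b' w hb2) => i; rewrite /r.
    have := sum_abs_bound w i.
    lra.
  move: m2 m3'; rewrite !ler_norml => /andP[m2 m2'] /andP[m3 m3'].
  rewrite /=; lra.
have [c [hc1 hc2]] := clz _ _ FD (nbhs_coord z eta30).
have m4 : `|sqdist z b - sqdist c b| <= e.
  apply: h3 => i; first exact: hc2.
  rewrite /r; have : `|b i 0| <= beta := sum_abs_bound b i.
  have := sum_abs_ge0 w.
  lra.
move: m4; rewrite !(sqdist_sym z) (sqdist_sym c) ler_norml => /andP[m4 m4'].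
move: hc1 => /= hc1.
rewrite /e in m4 m4' hc1; lra.
Qed.

Lemma cont_coord (n m : nat) (g : 'rV[R]_n -> 'cV[R]_m) (x0 : 'rV[R]_n) :
  (forall e, 0 < e -> exists2 d : R, 0 < d & forall x : 'rV[R]_n,
     (forall k, `|x0 ord0 k - x ord0 k| < d) ->
     forall i, `|g x0 i 0 - g x i 0| < e) ->
  g @ nbhs x0 --> g x0.
Proof.
move=> h V /=; rewrite nbhs_simpl => /nbhs_coordP [e e0 hV].
have [d d0 hd] := h e e0.
apply: filterS (nbhs_coord x0 d0) => x hx.
apply: hV => i j; rewrite (ord1 j); apply: hd => k.
exact: hx.
Qed.

Lemma mod_sum (H : pzRingType) (modH : H -> R) (mod0 : modH 0 = 0)
  (modD : forall a b, modH (a + b) <= modH a + modH b)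
  (I : Type) (s : seq I) (F : I -> H) :
  modH (\sum_(i <- s) F i) <= \sum_(i <- s) modH (F i).
Proof.
elim/big_rec2: _ => [|i y1 y2 _ IH]; first by rewrite mod0.
by apply: le_trans (modD _ _) _; rewrite lerD2l.
Qed.

Lemma KA_cont (H : fieldType) (modH : H -> R)
  (mod0 : modH 0 = 0) (modD : forall a b, modH (a + b) <= modH a + modH b)
  (modM : forall a b, modH (a * b) = modH a * modH b)
  (modN : forall a, modH (- a) = modH a)
  (modge0 : forall a, 0 <= modH a)
  (n d : nat) (E : 'rV[R]_n -> 'rV[H]_d)
  (Eonto : forall z, exists x, E x = z /\
       forall k, `|x ord0 k| <= \sum_j modH (z ord0 j))
  (Elip : forall (x x' : 'rV[R]_n) (eta : R), (forall k, `|x ord0 k - x' ord0 k| <= eta) ->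
       forall j, modH (E x ord0 j - E x' ord0 j) <= 2 * eta)
  (m : nat) (A : 'M[H]_(m, d)) (Omega : set 'cV[R]_m) (p : 'cV[R]_m -> 'cV[R]_m) :
  (forall b, Omega b -> proj_set (KA modH A) b = [set p b]) ->
  {within Omega, continuous p}.
Proof.
move=> hp.
apply: (@proj_cont_abstract m n (fun x => map_mx modH (A *m (E x)^T))) hp.
- rewrite /KA; apply/seteqP; split.
    move=> _ [y _ <-]; have [x [Ex _]] := Eonto y^T.
    by exists x => //; rewrite Ex trmxK.
  by move=> _ [x _ <-]; exists (E x)^T.
- move=> x0; apply: cont_coord => e e0.
  set SA := \sum_i \sum_j modH (A i j).
  have SA0 : 0 <= SA by apply: sumr_ge0 => i _; apply: sumr_ge0.
  have SA1 : 0 < 2 * SA + 1 by lra.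
  exists (e / (2 * SA + 1)); first exact: divr_gt0.
  move=> x hx i.
  have mE : forall M : 'cV[H]_m, map_mx modH M i 0 = modH (M i 0) by move=> M; rewrite mxE.
  rewrite !mE.
  set a := (A *m (E x0)^T) i 0; set a' := (A *m (E x)^T) i 0.
  have h1 : `|modH a - modH a'| <= modH (a - a').
    rewrite ler_norml; apply/andP; split.
      have := modD (a' - a) a; rewrite subrK -(modN (a' - a)) opprB; lra.
    have := modD (a - a') a'; rewrite subrK; lra.
  apply: le_lt_trans h1 _.
  have -> : a - a' = \sum_j A i j * (E x0 ord0 j - E x ord0 j).
    rewrite /a /a' !mxE -sumrB; apply: eq_bigr => j _.
    by rewrite !mxE mulrBr.
  apply: le_lt_trans (mod_sum mod0 modD _ _) _.
  apply: (@le_lt_trans _ _ (\sum_j modH (A i j) * (2 * (e / (2 * SA + 1))))).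
    apply: ler_sum => j _; rewrite modM; apply: ler_wpM2l => //.
    by apply: Elip => k; apply: ltW.
  rewrite -mulr_suml.
  have : \sum_j modH (A i j) <= SA.
    exact: (@ler_term_sum m (fun i => \sum_j modH (A i j)) i
             (fun i => sumr_ge0 _ (fun j _ => modge0 _))).
  have he : e / (2 * SA + 1) * (2 * SA + 1) = e by rewrite divfK // gt_eqF.
  have := sumr_ge0 (index_enum 'I_d) (fun j _ => modge0 (A i j)).
  nra.
- move=> r.
  set P := pinvmx A^T.
  exists (\sum_j \sum_i r * modH (P i j)) => x hx.
  set y := A *m (E x)^T.
  have hy : forall i, modH (y i 0) <= r.
    by move=> i; have := hx i; rewrite mxE ger0_norm.
  set u := y^T *m P.
  have [x' [Ex' hx']] := Eonto u.
  exists x'; split.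
    move=> k; apply: le_trans (hx' k) _.
    apply: ler_sum => j _; rewrite /u mxE.
    apply: le_trans (mod_sum mod0 modD _ _) _.
    apply: ler_sum => i _; rewrite modM mxE.
    by apply: ler_wpM2r.
  congr map_mx; rewrite Ex' /u.
  have hsub : (y^T <= A^T)%MS by rewrite /y trmx_mul trmxK submxMl.
  by apply: trmx_inj; rewrite trmx_mul trmxK (mulmxKpV hsub).
Qed.

Lemma real_case (m d : nat) (A : 'M[R]_(m, d)) (Omega : set 'cV[R]_m)
  (p : 'cV[R]_m -> 'cV[R]_m) :
  (forall b, Omega b -> proj_set (KA (fun z : R => `|z|) A) b = [set p b]) ->
  {within Omega, continuous p}.
Proof.
apply: (@KA_cont R (fun z : R => `|z|) (normr0 _) (@ler_normD _ _)
   (@normrM _) (@normrN _ _) (@normr_ge0 _ _) d d id).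
- move=> z; exists z; split => // k.
  exact: (@ler_term_sum d (fun j => `|z ord0 j|) k (fun j => normr_ge0 _)).
- move=> x x' eta h j /=; have := h j; have := normr_ge0 (x ord0 j - x' ord0 j).
  lra.
Qed.

Lemma normc_ge0 (z : R[i]) : 0 <= Normc.normc z.
Proof. by case: z => a b; apply: sqrtr_ge0. Qed.

Lemma Re_le_normc (z : R[i]) : `|complex.Re z| <= Normc.normc z.
Proof.
case: z => a b /=; rewrite -sqrtr_sqr ler_sqrt ?addr_ge0 ?sqr_ge0 //.
by rewrite lerDl sqr_ge0.
Qed.

Lemma Im_le_normc (z : R[i]) : `|complex.Im z| <= Normc.normc z.
Proof.
case: z => a b /=; rewrite -sqrtr_sqr ler_sqrt ?addr_ge0 ?sqr_ge0 //.
by rewrite lerDr sqr_ge0.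
Qed.

Lemma normc_le (u v : R) : Normc.normc (u +i* v)%C <= `|u| + `|v|.
Proof.
rewrite /= -[`|u| + `|v|]ger0_norm ?addr_ge0 // -sqrtr_sqr ler_sqrt ?sqr_ge0 //.
rewrite -(real_normK (num_real u)) -(real_normK (num_real v)).
have := normr_ge0 u; have := normr_ge0 v; nra.
Qed.

Lemma complex_case (m d : nat) (A : 'M[R[i]]_(m, d)) (Omega : set 'cV[R]_m)
  (p : 'cV[R]_m -> 'cV[R]_m) :
  (forall b, Omega b -> proj_set (KA (@Normc.normc R) A) b = [set p b]) ->
  {within Omega, continuous p}.
Proof.
apply: (@KA_cont R[i] (@Normc.normc R) (@Normc.normc0 R) (@le_normcD R)
   (@Normc.normcM R) (@normcN R) normc_ge0 (d + d) d
   (fun x => \row_j (x ord0 (lshift d j) +i* x ord0 (rshift d j))%C)).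
- move=> z.
  exists (row_mx (\row_j complex.Re (z ord0 j)) (\row_j complex.Im (z ord0 j))); split.
    apply/rowP => j; rewrite mxE row_mxEl row_mxEr !mxE.
    by case: (z ord0 j).
  move=> k; rewrite mxE; case: (fintype.split k) => j; rewrite mxE.
    apply: le_trans (Re_le_normc _) _.
    exact: (@ler_term_sum d (fun j => Normc.normc (z ord0 j)) j (fun j => normc_ge0 _)).
  apply: le_trans (Im_le_normc _) _.
  exact: (@ler_term_sum d (fun j => Normc.normc (z ord0 j)) j (fun j => normc_ge0 _)).
- move=> x x' eta h j; rewrite !mxE.
  have -> : ((x ord0 (lshift d j) +i* x ord0 (rshift d j)) -
            (x' ord0 (lshift d j) +i* x' ord0 (rshift d j)))%C =
            ((x ord0 (lshift d j) - x' ord0 (lshift d j)) +i*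
             (x ord0 (rshift d j) - x' ord0 (rshift d j)))%C by [].
  apply: le_trans (normc_le _ _) _.
  have := h (lshift d j); have := h (rshift d j); lra.
Qed.

End Gen.

Theorem lemma5p4 (R : realType) :
  (forall (m d : nat) (A : 'M[R]_(m, d)) (Omega : set 'cV[R]_m)
          (p : 'cV[R]_m -> 'cV[R]_m),
      domain_cV Omega -> convex_set_cV Omega ->
      Omega `<=` U_set (KA (fun z : R => `|z|) A) ->
      (forall b, Omega b -> proj_set (KA (fun z : R => `|z|) A) b = [set p b]) ->
      {within Omega, continuous p}) /\
  (forall (m d : nat) (A : 'M[R[i]]_(m, d)) (Omega : set 'cV[R]_m)
          (p : 'cV[R]_m -> 'cV[R]_m),
      domain_cV Omega -> convex_set_cV Omega ->
      Omega `<=` U_set (KA (@Normc.normc R) A) ->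
      (forall b, Omega b -> proj_set (KA (@Normc.normc R) A) b = [set p b]) ->
      {within Omega, continuous p}).
Proof.
split.
- move=> m d A Omega p _ _ _ hp; exact: real_case hp.
- move=> m d A Omega p _ _ _ hp; exact: complex_case hp.
Qed.
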